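(* Let $D=(Q,\Sigma,\delta,q_0,A)$ and $D'=(Q',\Sigma,\delta',q_0',A')$ be minimized DFAs over the same alphabet with $L(D)\sim L(D')$. Then $D\cong_I D'$.
   Context: All DFAs are complete (total transition function $\delta$, extended to words in the usual way) and all their states are reachable from the start state. A DFA is \emph{minimized} if it is the minimal DFA for its language, i.e. all states are reachable and no two distinct states are equivalent (no two distinct states $p\neq q$ satisfy $L(p)=L(q)$, where $L(q)$ is the language accepted when $q$ is used as start state). Two languages $L,L'$ are \emph{finitely different}, written $L\sim L'$, if the symmetric difference $L\triangle L'$ is finite. The \emph{infinite part} $I(D)$ of a DFA $D$ is the set of states $q\in Q$ such that $\{w\in\Sigma^*:\delta(q_0,w)=q\}$ is infinite (equivalently: $q$ lies on a cycle, i.e. $\delta(q,w)=q$ for some nonempty $w$, or is reachable from a state on a cycle); the \emph{finite part} is $F(D)=Q\setminus I(D)$. We write $D\cong_I D'$ (isomorphic infinite parts) if there is a bijection $f:I(D)\to I(D')$ such that (1) for all $q\in I(D)$, $q\in A\iff f(q)\in A'$, and (2) for all $q\in I(D)$ and $c\in\Sigma$, $f(\delta(q,c))=\delta'(f(q),c)$. *)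

(* Defs.v *)
From mathcomp Require Import all_boot.
Set Implicit Arguments. Unset Strict Implicit. Unset Printing Implicit Defensive.

Record DFA (Sigma : finType) := MkDFA {
  state : finType;
  delta : state -> Sigma -> state;
  start : state;
  accept : pred state
}.
Arguments delta {Sigma} {d} _ _ : rename.
Arguments start {Sigma} d : rename.
Arguments accept {Sigma} d _ : rename.

Section DFADefs.
Variable Sigma : finType.
Variable D : DFA Sigma.

Definition delta_star (q : state D) (w : seq Sigma) : state D :=
  foldl (@delta Sigma D) q w.

Definition accepts_from (q : state D) (w : seq Sigma) : bool :=
  accept D (delta_star q w).

Definition lang (w : seq Sigma) : bool := accepts_from (start D) w.

Definition reachable_all : Prop :=
  forall q : state D, exists w, delta_star (start D) w = q.

Definition minimized : Prop :=
  reachable_all /\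
  forall p q : state D, (forall w, accepts_from p w = accepts_from q w) -> p = q.

Definition in_infinite_part (q : state D) : Prop :=
  ~ exists s : seq (seq Sigma), forall w, delta_star (start D) w = q -> w \in s.
End DFADefs.

Definition finitely_different (Sigma : finType) (L L' : seq Sigma -> bool) : Prop :=
  exists s : seq (seq Sigma), forall w, L w != L' w -> w \in s.

(* D ≅_I D': a bijection f : I(D) -> I(D') preserving acceptance and
   transitions (f represented as a total function, constrained on I(D)). *)
Definition iso_infinite_parts (Sigma : finType) (D D' : DFA Sigma) : Prop :=
  exists f : state D -> state D',
    [/\ (forall q, in_infinite_part q -> in_infinite_part (f q)),
        (forall p q, in_infinite_part p -> in_infinite_part q -> f p = f q -> p = q),
        (forall q', in_infinite_part q' -> exists2 q, in_infinite_part q & f q = q'),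
        (forall q, in_infinite_part q -> (accept D q = accept D' (f q))) &
        (forall q c, in_infinite_part q -> f (delta q c) = delta (f q) c)].

(* Main.v *)
From Stdlib Require Import ClassicalEpsilon Classical.
Require Import Defs.
From mathcomp Require Import all_boot.
Set Implicit Arguments. Unset Strict Implicit. Unset Printing Implicit Defensive.

Lemma ds_cat (Sigma : finType) (D : DFA Sigma) (q : state D) w u :
  delta_star q (w ++ u) = delta_star (delta_star q w) u.
Proof. by rewrite /delta_star foldl_cat. Qed.

Lemma ds_rcons (Sigma : finType) (D : DFA Sigma) (q : state D) w c :
  delta_star q (rcons w c) = delta (delta_star q w) c.
Proof. by rewrite /delta_star foldl_rcons. Qed.

Lemma in_sumn (T : eqType) (s : seq (seq T)) w : w \in s -> size w <= sumn (map size s).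
Proof.
elim: s => //= x s IH; rewrite in_cons => /orP [/eqP ->|/IH]; first exact: leq_addr.
move=> h; exact: (leq_trans h (leq_addl _ _)).
Qed.

Fixpoint allwords (Sigma : finType) (n : nat) : seq (seq Sigma) :=
  if n is n'.+1 then [::] :: [seq c :: w | c <- enum Sigma, w <- allwords Sigma n']
  else [:: [::]].

Lemma allwordsP (Sigma : finType) n (w : seq Sigma) : size w <= n -> w \in allwords Sigma n.
Proof.
elim: w n => [|c w IH] [|n] //=; try by rewrite in_cons eqxx.
move=> h; rewrite in_cons; apply/orP; right.
apply/allpairsP; exists (c, w) => /=; split => //; first by rewrite mem_enum.
exact: IH.
Qed.

Lemma infP (Sigma : finType) (D : DFA Sigma) (q : state D) :
  in_infinite_part q <-> forall N, exists w, N < size w /\ delta_star (start D) w = q.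
Proof.
split.
- move=> H N; apply: NNPP => Hn; apply: H; exists (allwords Sigma N) => w Hw.
  apply: allwordsP; rewrite leqNgt; apply/negP => hl; apply: Hn; by exists w.
- move=> H [s Hs]; have [w [h1 h2]] := H (sumn (map size s)).
  by have := in_sumn (Hs w h2); rewrite leqNgt h1.
Qed.

Section Transfer.
Variables (Sigma : finType) (D D' : DFA Sigma) (s : seq (seq Sigma)).
Hypothesis hs : forall w, lang D w != lang D' w -> w \in s.
Let M := sumn (map size s).

Lemma long_eq w : M < size w -> lang D w = lang D' w.
Proof.
move=> h; apply/eqP; apply/negPn/negP => /hs /in_sumn; by rewrite leqNgt h.
Qed.

Lemma acc_long w u : M < size w ->
  accepts_from (delta_star (start D) w) u = accepts_from (delta_star (start D') w) u.
Proof.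
move=> h; have := long_eq (w := w ++ u).
rewrite /lang /accepts_from !ds_cat size_cat; apply.
exact: leq_trans h (leq_addr _ _).
Qed.

Lemma transfer w1 w2 : minimized D' -> M < size w1 -> M < size w2 ->
  delta_star (start D) w1 = delta_star (start D) w2 ->
  delta_star (start D') w1 = delta_star (start D') w2.
Proof.
move=> [_ Hm] h1 h2 e; apply: Hm => u.
by rewrite -(acc_long _ h1) -(acc_long _ h2) e.
Qed.
End Transfer.

Theorem mainTheorem1 (Sigma : finType) (D D' : DFA Sigma) :
  minimized D -> minimized D' ->
  finitely_different (lang D) (lang D') ->
  iso_infinite_parts D D'.
Proof.
move=> mD mD' [s hs].
have hs' : forall w, lang D' w != lang D w -> w \in s.
  by move=> w; rewrite eq_sym; apply: hs.
set M := sumn (map size s).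
pose P q w := M < size w /\ delta_star (start D) w = q.
pose f q := delta_star (start D') (epsilon (inhabits [::]) (P q)).
have K : forall w, M < size w -> f (delta_star (start D) w) = delta_star (start D') w.
  move=> w hw; rewrite /f.
  have ex : exists w0, P (delta_star (start D) w) w0 by exists w.
  have [h1 h2] := epsilon_spec (inhabits [::]) _ ex.
  exact: (transfer hs mD' h1 hw h2).
have longI : forall q, in_infinite_part q -> exists w, M < size w /\ delta_star (start D) w = q.
  by move=> q /infP; apply.
exists f; split.
- move=> q /infP Hq; apply/infP => N.
  have [w [h1 h2]] := Hq (maxn N M); exists w; rewrite gtn_max in h1.
  case/andP: h1 => h1 h1'; split => //; by rewrite -h2 K.
- move=> p q /longI [wp [hp <-]] /longI [wq [hq <-]]; rewrite !K //.
  exact: (transfer hs' mD hp hq).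
- move=> q' /infP Hq'; have [w [h1 h2]] := Hq' M.
  exists (delta_star (start D) w); last by rewrite K.
  apply/infP => N; have [w2 [h3 h4]] := Hq' (maxn N M).
  rewrite gtn_max in h3; case/andP: h3 => h3 h3'.
  exists w2; split => //; apply: (transfer hs' mD h3' h1); by rewrite h2 h4.
- move=> q /longI [w [hw <-]]; rewrite K //.
  have := acc_long hs [::] hw; by rewrite /accepts_from /delta_star.
- move=> q c /longI [w [hw <-]]; rewrite K // -ds_rcons K ?ds_rcons //.
  by rewrite size_rcons; exact: leqW.
Qed.
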